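(* Let $n\ge2$ be an integer, and let $\mathcal S$ be the smallest collection of $(n+1)$-element sets of non-negative integers such that: (i) $\{j,j+1,\dots,j+n\}\in\mathcal S$ for each $j=0,1,\dots,n-2$; (ii) if $S\in\mathcal S$ then $2S:=\{2s: s\in S\}\in\mathcal S$; (iii) if $S,T\in\mathcal S$ satisfy $|S\cap T|=n$, then for each $a\in S\cap T$ the set $(S\cup T)\setminus\{a\}$ belongs to $\mathcal S$. Then $\{0,1,2,4,8,\dots,2^{n-1}\}\in\mathcal S$. *)

(* Defs.v *)
From mathcomp Require Import all_boot.
From mathcomp Require Import finmap.
Set Implicit Arguments. Unset Strict Implicit. Unset Printing Implicit Defensive.
Local Open Scope fset_scope.

Inductive inS (n : nat) : {fset nat} -> Prop :=
| inS_base (j : nat) :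
    (j <= n - 2)%N -> inS n [fset (j + i)%N | i in iota 0 n.+1]
| inS_dbl (S : {fset nat}) :
    inS n S -> inS n [fset (2 * s)%N | s in S]
| inS_glue (S T : {fset nat}) (a : nat) :
    inS n S -> inS n T -> #|` S `&` T| = n -> a \in S `&` T ->
    inS n ((S `|` T) `\ a).

Definition powset (n : nat) : {fset nat} :=
  [fset 0%N] `|` [fset (2 ^ k)%N | k in iota 0 n].

(* Main.v *)
Require Import Defs.
From mathcomp Require Import all_boot.
From mathcomp Require Import finmap.
From mathcomp Require Import zify.
Local Open Scope fset_scope.

Definition good (n : nat) (W : {fset nat}) :=
  forall S, S `<=` W -> #|` S| = n.+1 -> inS n S.

Lemma good_sub n (W W' : {fset nat}) : W' `<=` W -> good n W -> good n W'.
Proof. move=> sub gW S sS cS; apply: gW => //; exact: fsubset_trans sub. Qed.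

Lemma extend n (W C : {fset nat}) y :
  good n W -> C `<=` W -> #|` C| = n -> y \notin W -> inS n (y |` C) ->
  good n (y |` W).
Proof.
move=> gW CW cC yW yC.
have key : forall k D, D `<=` W -> #|` D| = n -> #|` D `\` C| = k ->
    inS n (y |` D).
  elim=> [|k IH] D DW cD ck.
    have DC : D `<=` C by rewrite -fsetD_eq0 -cardfs_eq0 ck.
    have := fsubset_leqif_cards DC; rewrite cD cC => -[_].
    by rewrite eqxx => /esym/eqP ->.
  have /fset0Pn [d dDC] : D `\` C != fset0 by rewrite -cardfs_eq0 ck.
  have /fset0Pn [c cCD] : C `\` D != fset0.
    apply/negP=> /eqP; move/eqP; rewrite fsetD_eq0 => CD.
    have := fsubset_leqif_cards CD; rewrite cD cC => -[_].
    rewrite eqxx => /esym/eqP eCD.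
    by move: dDC; rewrite eCD inE => /andP[/negP].
  move: dDC cCD; rewrite !inE => /andP [dC dD] /andP [cD' cC'].
  have dW : d \in W by apply: (fsubsetP DW).
  have cW : c \in W by apply: (fsubsetP CW).
  have yd : y != d by apply/eqP=> e; move: yW; rewrite e dW.
  have yc : y != c by apply/eqP=> e; move: yW; rewrite e cW.
  have cd : c != d by apply/eqP=> e; move: dC; rewrite -e cC'.
  set D' := c |` (D `\ d).
  have D'W : D' `<=` W.
    apply/fsubsetP=> z; rewrite !inE => /orP [/eqP -> //|/andP [_ zD]].
    exact: (fsubsetP DW).
  have cD'' : #|` D'| = n.
    rewrite cardfsU1 !inE (negbTE cD') andbF /=.
    by move: cD; rewrite (cardfsD1 d) dD => <-.
  have ck' : #|` D' `\` C| = k.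
    have -> : D' `\` C = (D `\` C) `\ d.
      apply/fsetP=> z; rewrite !inE.
      case: (z =P c) => [->|_] /=; first by rewrite cC' /= andbF.
      by case: (z \in C); case: (z \in D); case: (z == d).
    move: ck; rewrite (cardfsD1 d (D `\` C)) !inE dC dD /=; lia.
  have hT := IH D' D'W cD'' ck'.
  have hS : inS n (c |` D).
    apply: gW.
      apply/fsubsetP=> z; rewrite !inE => /orP [/eqP -> //|zD].
      exact: (fsubsetP DW).
    by rewrite cardfsU1 cD' cD.
  have := inS_glue (a:=c) hS hT.
  have eI : (c |` D) `&` (y |` D') = D'.
    apply/fsetP=> z; rewrite !inE.
    case: (z =P c) => [->|zc] /=; first by rewrite orbT.
    case: (z =P y) => [->|zy] /=.
      have yD : y \notin D by apply/negP=> yD; move: yW; rewrite (fsubsetP DW _ yD).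
      by rewrite (negbTE yD) andbF.
    by case: (z \in D); case: (z == d).
  have cI : c \in D' by rewrite !inE eqxx.
  rewrite eI cD'' => /(_ erefl cI).
  have -> : ((c |` D) `|` (y |` D')) `\ c = y |` D; last by [].
  apply/fsetP=> z; rewrite !inE.
  case: (z =P c) => [->|zc] /=; first by rewrite (negbTE cD') eq_sym (negbTE yc).
  by case: (z \in D); case: (z == y); case: (z == d).
move=> S SW cS.
case: (boolP (y \in S)) => yS.
  have DW : S `\ y `<=` W.
    apply/fsubsetP=> z; rewrite !inE => /andP [zy zS].
    by move: (fsubsetP SW z zS); rewrite !inE (negbTE zy).
  have cD : #|` S `\ y| = n by move: cS; rewrite (cardfsD1 y) yS => -[].
  have -> : S = y |` (S `\ y).
    apply/fsetP=> z; rewrite !inE; case: (z =P y) => [->|] //=.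
  exact: (key _ _ DW cD erefl).
apply: gW => //; apply/fsubsetP=> z zS.
by move: (fsubsetP SW z zS); rewrite !inE; case: (z =P y) => [e|//]; move: yS; rewrite -e zS.
Qed.

Lemma union_good n (W W' C : {fset nat}) :
  good n W -> good n W' -> C `<=` W -> C `<=` W' -> #|` C| = n ->
  good n (W `|` W').
Proof.
move=> gW gW' CW CW' cC.
pose U (s : seq nat) := foldr (fun y A => y |` A) W s.
have memU : forall s x, (x \in U s) = (x \in W) || (x \in s).
  elim=> [|y s IH] x /=; first by rewrite orbF.
  by rewrite !inE IH; case: (x == y); case: (x \in W); case: (x \in s).
have gU : forall s, all (fun x => x \in W') s -> good n (U s).
  elim=> [|y s IH] //= /andP [yW' alls].
  have gs := IH alls.
  case: (boolP (y \in U s)) => yU.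
    apply: good_sub gs; apply/fsubsetP=> z; rewrite !inE.
    by case: (z =P y) => [->|] //=.
  apply: (@extend n (U s) C y) => //.
    apply/fsubsetP=> z zC; rewrite memU (fsubsetP CW z zC) //.
  apply: gW'; last first.
    rewrite cardfsU1 cC; case: (boolP (y \in C)) => // yC.
    by move: yU; rewrite memU (fsubsetP CW y yC).
  apply/fsubsetP=> z; rewrite !inE => /orP [/eqP -> //|zC].
  exact: (fsubsetP CW').
apply: (@good_sub n (U W')); last by apply: gU; apply/allP.
apply/fsubsetP=> z; rewrite !inE memU => /orP [->//|zW'].
by rewrite orbC zW'.
Qed.

Lemma dbl_good n (W : {fset nat}) :
  good n W -> good n [fset (2 * x)%N | x in W].
Proof.
move=> gW S SW cS.
have ev : forall z, z \in S -> z = (2 * z./2)%N.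
  move=> z zS; have /imfsetP [w _ ->] := fsubsetP SW z zS.
  have h := doubleK w; rewrite -mul2n in h; by rewrite h.
set S' := [fset x./2 | x in S].
have eS : [fset (2 * s)%N | s in S'] = S.
  apply/fsetP=> z; apply/imfsetP/idP.
    by move=> [s /imfsetP [x xS ->] ->]; rewrite -ev.
  by move=> zS; exists z./2; [apply/imfsetP; exists z | apply: ev].
rewrite -eS; apply: inS_dbl; apply: gW.
  apply/fsubsetP=> x /imfsetP [z zS ->].
  have /imfsetP [w wW ez] := fsubsetP SW z zS.
  by rewrite ez mul2n doubleK.
rewrite card_in_imfset //= => x y xS yS exy.
by rewrite (ev x xS) (ev y yS) exy.
Qed.

Definition itv (a l : nat) : {fset nat} := [fset (a + i)%N | i in iota 0 l].

Lemma mem_itv a l x : (x \in itv a l) = (a <= x < a + l)%N.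
Proof.
apply/imfsetP/idP => [[i iI ->]|h].
  by move: iI; rewrite mem_iota; lia.
by exists (x - a)%N; [rewrite mem_iota|]; lia.
Qed.

Lemma card_itv a l : #|` itv a l| = l.
Proof.
rewrite card_imfset /=; last by move=> x y /addnI.
by rewrite undup_id ?iota_uniq // size_iota.
Qed.

Lemma good_single n (A : {fset nat}) : inS n A -> #|` A| = n.+1 -> good n A.
Proof.
move=> hA cA S SA cS.
have := fsubset_leqif_cards SA; rewrite cS cA => -[_].
by rewrite eqxx => /esym/eqP ->.
Qed.

Lemma good_G n m : (2 <= n)%N -> (m <= n - 2)%N -> good n (itv 0 (m + n.+1)).
Proof.
move=> hn; elim: m => [|m IH] hm.
  apply: good_single; last by rewrite card_itv.
  exact: (inS_base (n:=n) (j:=0)).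
have g1 : good n (itv (m.+1) n.+1).
  apply: good_single; last by rewrite card_itv.
  exact: (inS_base (n:=n) (j:=m.+1)).
have gu := @union_good n _ _ (itv m.+1 n) (IH (ltnW hm)) g1.
have {}gu := gu ltac:(apply/fsubsetP=> z; rewrite !mem_itv; lia)
   ltac:(apply/fsubsetP=> z; rewrite !mem_itv; lia) (card_itv _ _).
apply: (@good_sub n _ _ _ gu).
apply/fsubsetP=> z; rewrite in_fsetU !mem_itv; lia.
Qed.

Definition Gs n := itv 0 (n - 2 + n.+1).
Definition P n k : {fset nat} := [fset (2 ^ k * x)%N | x in Gs n].
Fixpoint K n k : {fset nat} := if k is k'.+1 then K n k' `|` P n k else P n 0.


Lemma inP n k x : (x < n - 2 + n.+1)%N -> (2 ^ k * x)%N \in P n k.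
Proof. by move=> hx; apply/imfsetP; exists x => //; rewrite mem_itv. Qed.

Lemma good_P n k : (2 <= n)%N -> good n (P n k).
Proof.
move=> hn; elim: k => [|k IH].
  apply: (@good_sub n (Gs n)); last exact: good_G.
  by apply/fsubsetP=> z /imfsetP [x xG ->]; rewrite expn0 mul1n.
apply: (@good_sub n _ _ _ (@dbl_good n _ IH)).
apply/fsubsetP=> z /imfsetP [x xG ->]; apply/imfsetP; exists (2 ^ k * x)%N.
  by apply/imfsetP; exists x.
by rewrite expnS mulnA.
Qed.

Lemma P_sub_K n j m : (j <= m)%N -> P n j `<=` K n m.
Proof.
elim: m => [|m IH] hj /=; first by move: hj; rewrite leqn0 => /eqP ->.
move: hj; rewrite leq_eqVlt => /orP [/eqP ->|h]; first exact: fsubsetUr.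
exact: fsubset_trans (IH h) (fsubsetUl _ _).
Qed.

Lemma good_K n k : (2 <= n)%N -> good n (K n k).
Proof.
move=> hn; elim: k => [|k IH] /=; first exact: good_P.
set C := [fset (2 ^ k.+1 * i)%N | i in iota 0 n].
apply: (@union_good n _ _ C IH (good_P n k.+1 hn)).
- apply: fsubset_trans _ (@P_sub_K n k k (leqnn k)).
  apply/fsubsetP=> z /imfsetP [i iI ->].
  move: iI; rewrite mem_iota => hi.
  rewrite expnS -mulnA mulnCA; apply: inP; lia.
- apply/fsubsetP=> z /imfsetP [i iI ->].
  move: iI; rewrite mem_iota => hi; apply: inP; lia.
- rewrite card_imfset /=; first by rewrite undup_id ?iota_uniq // size_iota.
  by move=> x y /eqP; rewrite eqn_pmul2l ?expn_gt0 // => /eqP.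
Qed.

Theorem lemma4 (n : nat) (hn : (2 <= n)%N) : inS n (powset n).
Proof.
apply: (@good_K n (n - 2) hn); last first.
  rewrite /powset cardfsU1.
  have -> : 0 \notin [fset (2 ^ k)%N | k in iota 0 n].
    by apply/imfsetP => -[k _ /eqP]; rewrite eq_sym expn_eq0.
  rewrite card_imfset /=; first by rewrite undup_id ?iota_uniq // size_iota.
  by move=> x y /eqP; rewrite eqn_exp2l // => /eqP.
apply/fsubsetP=> z; rewrite in_fsetU => /orP [|].
  rewrite inE => /eqP ->; apply: (fsubsetP (@P_sub_K n 0 (n - 2) (leq0n _))).
  by rewrite -(muln0 (2 ^ 0)); apply: inP; lia.
move=> /imfsetP [k kI ->]; move: kI; rewrite mem_iota => hk.
case: k hk => [|k] hk.
  apply: (fsubsetP (@P_sub_K n 0 (n - 2) (leq0n _))).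
  by rewrite -(muln1 (2 ^ 0)); apply: inP; lia.
have hkn : (k <= n - 2)%N by lia.
apply: (fsubsetP (@P_sub_K n k (n - 2) hkn)).
by rewrite expnS mulnC; apply: inP; lia.
Qed.
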